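(* Let $N$ be a nonnegative integer and let $f,a_1,a_2,p,d_1,d_2\in\mathbb{C}$ be such that every hypergeometric series below is well defined (no lower parameter is a nonpositive integer) and the denominator $p(f-p-1)-a_1a_2$ is nonzero. Put $$h=\frac{p(a_1+a_2-f+1)(p-f+1)}{p(f-p-1)-a_1a_2}.$$ Then $$ {}_{9}F_{8}\left[\begin{matrix} f-1,\ \frac{f+1}{2},\ a_1,\ a_2,\ f-p,\ p+1,\ d_1,\ d_2,\ -N\\ \frac{f-1}{2},\ f-a_1,\ f-a_2,\ p,\ f-p-1,\ f-d_1,\ f-d_2,\ f+N\end{matrix};1\right]$$ $$=\frac{(f)_N\,(f-d_1-d_2)_N}{(f-d_1)_N\,(f-d_2)_N}\ {}_{5}F_{4}\left[\begin{matrix} d_1,\ d_2,\ f-a_1-a_2-1,\ h+1,\ -N\\ f-a_1,\ f-a_2,\ 1+d_1+d_2-f-N,\ h\end{matrix};1\right].$$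
   Context: $(x)_n$ denotes the Pochhammer symbol: $(x)_0=1$, $(x)_n=x(x+1)\cdots(x+n-1)$ for $n\ge1$. The generalized hypergeometric function is $${}_{r+1}F_{r}\left[\begin{matrix} a_1,\dots,a_{r+1}\\ b_1,\dots,b_r\end{matrix};z\right]=\sum_{n=0}^{\infty}\frac{(a_1)_n\cdots(a_{r+1})_n}{(b_1)_n\cdots(b_r)_n\,n!}z^n ,$$ where no $b_i$ is a nonpositive integer; when one upper parameter equals $-N$ with $N$ a nonnegative integer the series terminates. *)

(* Defs.v *)
From mathcomp Require Import all_boot all_algebra.
From mathcomp Require Import reals complex.
Set Implicit Arguments. Unset Strict Implicit. Unset Printing Implicit Defensive.
Import GRing.Theory Num.Theory.
Local Open Scope ring_scope.

Definition poch {F : fieldType} (x : F) (n : nat) : F :=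
  \prod_(i < n) (x + i%:R).

Definition hyp_term {F : fieldType} (a b : seq F) (z : F) (n : nat) : F :=
  (\prod_(x <- a) poch x n) / ((\prod_(y <- b) poch y n) * (n`!)%:R) * z ^+ n.

(* Terminating hypergeometric series: when -N is one of the upper
   parameters, every term of index n > N vanishes ((-N)_n = 0), so the
   series is the finite sum of its terms of index 0..N. *)
Definition hypF_term {F : fieldType} (N : nat) (a b : seq F) (z : F) : F :=
  \sum_(n < N.+1) hyp_term a b z n.

Definition lower_ok {F : fieldType} (b : seq F) : Prop :=
  forall y, y \in b -> forall k : nat, y <> - (k%:R).

(* Main.v *)
Require Import Defs.
From mathcomp Require Import all_boot all_algebra.
From mathcomp Require Import reals complex.
From mathcomp Require Import ring zify.
Import GRing.Theory Num.Theory.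
Local Open Scope ring_scope.

Lemma poch0 {F : fieldType} (x : F) : poch x 0 = 1.
Proof. by rewrite /poch big_ord0. Qed.

Lemma pochS {F : fieldType} (x : F) n : poch x n.+1 = poch x n * (x + n%:R).
Proof. by rewrite /poch big_ord_recr. Qed.

Lemma pochSl {F : fieldType} (x y : F) n : x + 1 = y -> poch x n.+1 = x * poch y n.
Proof.
move=> <-; rewrite /poch big_ord_recl addr0; congr (_ * _).
by apply: eq_bigr => i _; rewrite lift0 /=; rewrite -natr1; ring.
Qed.

Lemma pochSl' {F : fieldType} {x y : F} : x + 1 = y -> forall n, poch x n.+1 = x * poch y n.
Proof. by move=> h n; apply: pochSl. Qed.

Lemma poch1 {F : fieldType} (x : F) : poch x 1 = x.
Proof. by rewrite pochS poch0 mul1r addr0. Qed.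

Lemma poch_neq0 {F : fieldType} (x : F) n :
  (forall i, (i < n)%N -> x + i%:R != 0) -> poch x n != 0.
Proof.
move=> h; rewrite /poch; apply/prodf_neq0 => i _; exact: h.
Qed.

Lemma poch_negn {F : fieldType} (n k : nat) : (n < k)%N -> poch (- n%:R : F) k = 0.
Proof.
move=> lt; rewrite /poch (bigD1 (Ordinal lt)) //= addNr mul0r //.
Qed.

Lemma fact_neq0 {F : numFieldType} n : (n`!)%:R != 0 :> F.
Proof. by rewrite pnatr_eq0 -lt0n fact_gt0. Qed.

Lemma natS_neq0 {F : numFieldType} n : (n.+1)%:R != 0 :> F.
Proof. by rewrite pnatr_eq0. Qed.

Lemma factS_F {F : numFieldType} n : ((n.+1)`!)%:R = (n`!)%:R * (n.+1)%:R :> F.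
Proof. by rewrite factS natrM mulrC. Qed.

Ltac side := rewrite ?nat1r; repeat (apply/andP; split); try done.
Definition tS {F : numFieldType} (A B C : F) (n k : nat) : F :=
  poch A k * poch B k * poch (- n%:R) k /
  (poch C k * poch (1 + A + B - C - n%:R) k * (k`!)%:R).

Definition HS {F : numFieldType} (A B C : F) (n j : nat) : F :=
  - (poch A j.+1 * poch B j.+1 * poch (- n%:R) j) /
  ((C + n%:R) * (C - A - B + n%:R) * poch C j * poch (1 + A + B - C - n%:R) j * (j`!)%:R).

Definition SS {F : numFieldType} (A B C : F) (n : nat) : F :=
  poch (C - A) n * poch (C - B) n / (poch C n * poch (C - A - B) n).

Lemma saal_step {F : numFieldType} (A B C : F) n j :
  (j <= n)%N ->
  C + j%:R != 0 -> C + n%:R != 0 -> C - A - B + n%:R != 0 ->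
  poch C j != 0 -> poch (1 + A + B - C - n%:R) j != 0 ->
  1 + A + B - C - n%:R + j%:R != 0 -> 1 + A + B - C - (n.+1)%:R != 0 ->
  tS A B C n.+1 j.+1 - (C - A + n%:R) * (C - B + n%:R) / ((C + n%:R) * (C - A - B + n%:R)) * tS A B C n j.+1
  = HS A B C n j.+1 - HS A B C n j.
Proof.
move=> jn h1 h2 h3 h4 h5 h6 h7.
rewrite /tS /HS.
rewrite (@pochSl _ (- (n.+1)%:R) (- n%:R)); last by rewrite -natr1; ring.
rewrite (@pochSl _ (1 + A + B - C - (n.+1)%:R) (1 + A + B - C - n%:R)); last by rewrite -natr1; ring.
rewrite !(pochS _ j.+1) !(pochS _ j) !factS_F.
have h8 := fact_neq0 (F:=F) j. have h9 := natS_neq0 (F:=F) j.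
field.
by rewrite !nat1r; repeat (apply/andP; split).

Qed.

Lemma sum_ext_last {F : numFieldType} (u : nat -> F) n :
  u n.+1 = 0 -> \sum_(k < n.+2) u k = \sum_(k < n.+1) u k.
Proof. by move=> h; rewrite big_ord_recr /= h addr0. Qed.

Lemma telesc {F : numFieldType} (u g : nat -> F) n :
  (forall k, (k < n)%N -> u k = g k.+1 - g k) ->
  \sum_(k < n) u k = g n - g 0%N.
Proof.
move=> h; rewrite -(big_mkord xpredT); apply: telescope_sumr_eq => // k /andP[_ kn].
Qed.

Lemma saal {F : numFieldType} (A B C : F) n :
  (forall i, (i <= n)%N -> C + i%:R != 0) ->
  (forall i, (i <= n)%N -> C - A - B + i%:R != 0) ->
  (forall i, (i <= n)%N -> 1 + A + B - C - n%:R + i%:R != 0) ->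
  \sum_(k < n.+1) tS A B C n k = SS A B C n.
Proof.
elim: n => [|n IH] hC hCAB hD.
  by rewrite big_ord1 /tS /SS !poch0 /= !mulr1 !divr1.
have hD' : forall i, (i <= n)%N -> 1 + A + B - C - n%:R + i%:R != 0.
  move=> i hi; have := hD i.+1 hi.
  by have -> : 1 + A + B - C - (n.+1)%:R + (i.+1)%:R = 1 + A + B - C - n%:R + i%:R
    by rewrite -!natr1; ring.
have IH' := IH (fun i hi => hC i (leqW hi)) (fun i hi => hCAB i (leqW hi)) hD'.
set rho := (C - A + n%:R) * (C - B + n%:R) / ((C + n%:R) * (C - A - B + n%:R)).
have hCn := hC n (leqnSn n). have hCABn := hCAB n (leqnSn n).
have E1 : \sum_(k < n.+2) (tS A B C n.+1 k - rho * tS A B C n k) = 0.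
  rewrite (@telesc _ (fun k => tS A B C n.+1 k - rho * tS A B C n k) (fun k => if k is j.+1 then HS A B C n j else 0)).
    by rewrite /HS poch_negn // !(mulr0, oppr0, mul0r, subr0).
  move=> [|j] hj /=.
    rewrite /tS !poch0 /HS !poch0 /= subr0 !mulr1 !divr1 /rho.
    rewrite !poch1; field; by rewrite hCn hCABn.
  rewrite /rho; apply: saal_step => //. all: try (by have := hD 0%N isT; rewrite addr0).
  - by apply: hC; lia.
  - by apply: poch_neq0 => i hi; apply: hC; lia.
  - by apply: poch_neq0 => i hi; apply: hD'; lia.
  - by apply: hD'; lia.
have E2 : \sum_(k < n.+2) tS A B C n k = \sum_(k < n.+1) tS A B C n k.
  by apply: sum_ext_last; rewrite /tS poch_negn // mulr0 mul0r.
move: E1; rewrite sumrB -mulr_sumr E2 IH' => /eqP; rewrite subr_eq0 => /eqP ->.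
rewrite /rho /SS !pochS.
have h1 : poch C n != 0 by apply: poch_neq0 => i hi; apply: hC; lia.
have h2 : poch (C - A - B) n != 0 by apply: poch_neq0 => i hi; apply: hCAB; lia.
field; by rewrite h1 h2 hCn hCABn.
Qed.

Definition tD {F : numFieldType} (a b c : F) (n k : nat) : F :=
  (a + 2%:R * k%:R) / a * poch a k * poch b k * poch c k * poch (- n%:R) k /
  (poch (1 + a - b) k * poch (1 + a - c) k * poch (1 + a + n%:R) k * (k`!)%:R).

Definition HD {F : numFieldType} (a b c : F) (n j : nat) : F :=
  (1 + a + n%:R) / ((1 + a - b + n%:R) * (1 + a - c + n%:R) * a) *
  (poch a j.+1 * poch b j.+1 * poch c j.+1 * poch (- n%:R) j) /
  (poch (1 + a - b) j * poch (1 + a - c) j * poch (1 + a + n%:R) j.+1 * (j`!)%:R).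

Definition SD {F : numFieldType} (a b c : F) (n : nat) : F :=
  poch (1 + a) n * poch (1 + a - b - c) n / (poch (1 + a - b) n * poch (1 + a - c) n).

Lemma doug_step {F : numFieldType} (a b c : F) n j :
  a != 0 -> 1 + a + n%:R != 0 -> 1 + a - b + n%:R != 0 -> 1 + a - c + n%:R != 0 ->
  1 + a - b + j%:R != 0 -> 1 + a - c + j%:R != 0 ->
  poch (1 + a - b) j != 0 -> poch (1 + a - c) j != 0 ->
  poch (1 + a + (n.+1)%:R) j != 0 -> 1 + a + (n.+1)%:R + j%:R != 0 ->
  tD a b c n.+1 j.+1 - (1 + a + n%:R) * (1 + a - b - c + n%:R) / ((1 + a - b + n%:R) * (1 + a - c + n%:R)) * tD a b c n j.+1
  = HD a b c n j.+1 - HD a b c n j.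
Proof.
move=> h1 h2 h3 h4 h5 h6 h7 h8 h9 h10.
rewrite /tD /HD.
rewrite (@pochSl _ (- (n.+1)%:R) (- n%:R)); last by rewrite -natr1; ring.
have E : 1 + a + n%:R + 1 = 1 + a + (n.+1)%:R by rewrite -natr1; ring.
rewrite !(pochSl' E).
rewrite !(pochS _ j.+1) !(pochS _ j) !factS_F.
have h11 := fact_neq0 (F:=F) j. have h12 := natS_neq0 (F:=F) j.
field.
by rewrite !nat1r; repeat (apply/andP; split).
Qed.

Lemma doug {F : numFieldType} (a b c : F) n :
  a != 0 ->
  (forall i, (i <= n)%N -> 1 + a - b + i%:R != 0) ->
  (forall i, (i <= n)%N -> 1 + a - c + i%:R != 0) ->
  (forall i, (i <= n.*2)%N -> 1 + a + i%:R != 0) ->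
  \sum_(k < n.+1) tD a b c n k = SD a b c n.
Proof.
move=> ha; elim: n => [|n IH] hb hc hA.
  by rewrite big_ord1 /tD /SD !poch0 /= !mulr1 !divr1 !mulr0 addr0 divff.
have hA' : forall i, (i <= n.*2)%N -> 1 + a + i%:R != 0.
  by move=> i hi; apply: hA; rewrite doubleS; lia.
have IH' := IH (fun i hi => hb i (leqW hi)) (fun i hi => hc i (leqW hi)) hA'.
set rho := (1 + a + n%:R) * (1 + a - b - c + n%:R) / ((1 + a - b + n%:R) * (1 + a - c + n%:R)).
have hbn := hb n (leqnSn n). have hcn := hc n (leqnSn n).
have hAn : 1 + a + n%:R != 0 by apply: hA; rewrite doubleS; lia.
have E1 : \sum_(k < n.+2) (tD a b c n.+1 k - rho * tD a b c n k) = 0.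
  rewrite (@telesc _ (fun k => tD a b c n.+1 k - rho * tD a b c n k) (fun k => if k is j.+1 then HD a b c n j else 0)).
    by rewrite /HD poch_negn // !(mulr0, oppr0, mul0r, subr0).
  move=> [|j] hj /=.
    rewrite /tD !poch0 /HD !poch0 /= subr0 !mulr1 !divr1 /rho !mulr0 addr0 divff // mul1r.
    rewrite !poch1; field; by rewrite hAn hbn hcn ha.
  rewrite /rho; apply: doug_step => //.
  - by apply: hb; lia.
  - by apply: hc; lia.
  - by apply: poch_neq0 => i hi; apply: hb; lia.
  - by apply: poch_neq0 => i hi; apply: hc; lia.
  - apply: poch_neq0 => i hi.
    have -> : 1 + a + (n.+1)%:R + i%:R = 1 + a + (n.+1 + i)%:R by rewrite natrD; ring.
    by apply: hA; rewrite doubleS; lia.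
  - have -> : 1 + a + (n.+1)%:R + j%:R = 1 + a + (n.+1 + j)%:R by rewrite natrD; ring.
    by apply: hA; rewrite doubleS; lia.
have E2 : \sum_(k < n.+2) tD a b c n k = \sum_(k < n.+1) tD a b c n k.
  by apply: sum_ext_last; rewrite /tD poch_negn // mulr0 mul0r.
move: E1; rewrite sumrB -mulr_sumr E2 IH' => /eqP; rewrite subr_eq0 => /eqP ->.
rewrite /rho /SD !pochS.
have h1 : poch (1 + a - b) n != 0 by apply: poch_neq0 => i hi; apply: hb; lia.
have h2 : poch (1 + a - c) n != 0 by apply: poch_neq0 => i hi; apply: hc; lia.
field; by rewrite h1 h2 hbn hcn.
Qed.

Lemma poch_add {F : fieldType} (x : F) m n : poch x (m + n) = poch x m * poch (x + m%:R) n.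
Proof.
rewrite /poch big_split_ord /=; congr (_ * _).
by apply: eq_bigr => i _; rewrite natrD addrA.
Qed.

Lemma poch_refl {F : fieldType} (x : F) k : poch x k = (-1) ^+ k * poch (- x - k%:R + 1) k.
Proof.
elim: k => [|k IH]; first by rewrite !poch0 expr0 mul1r.
rewrite pochS IH (@pochSl _ _ (- x - k%:R + 1)); last by rewrite -natr1; ring.
rewrite exprS -natr1; ring.
Qed.

Lemma fact_poch {F : numFieldType} j : (j`!)%:R = poch (1 : F) j.
Proof.
elim: j => [|j IH]; first by rewrite poch0.
by rewrite factS_F IH pochS -natr1; ring.
Qed.

Lemma sum_tri {F : numFieldType} (G : nat -> nat -> F) N :
  \sum_(j < N.+1) \sum_(k < j.+1) G j k
  = \sum_(k < N.+1) \sum_(i < (N - k).+1) G (k + i)%N k.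
Proof.
elim: N => [|N IH]; first by rewrite !big_ord1.
rewrite big_ord_recr /= IH [RHS]big_ord_recr /= subnn big_ord1 addn0.
rewrite [X in _ = X + _](eq_bigr (fun k : 'I_N.+1 =>
   \sum_(i < (N - k).+1) G (k + i)%N k + G N.+1 k)); last first.
  move=> k _; rewrite subSn; last by rewrite -ltnS.
  rewrite big_ord_recr /=; congr (_ + _); congr (G _ _); have := ltn_ord k; lia.
rewrite big_split /= [X in _ = _ + X + _]big_ord_recr /=.
by rewrite -addrA; congr (_ + _); rewrite big_ord_recr /= big_ord_recr.
Qed.

Definition UW {F : numFieldType} (a d e : F) (N j : nat) : F :=
  poch d j * poch e j * poch (- N%:R) j /
  (poch (d + e - a - N%:R) j * (j`!)%:R * poch (1 + a) j).

Definition alW {F : numFieldType} (a b c d e : F) (N k : nat) : F :=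
  (a + 2%:R * k%:R) / a * poch a k * poch b k * poch c k * poch d k * poch e k *
  poch (- N%:R) k * (-1) ^+ k /
  (poch (1 + a - b) k * poch (1 + a - c) k * poch (d + e - a - N%:R) k *
   poch (1 + a) (k + k) * (k`!)%:R).

Lemma poch_nat_neq0 {F : numFieldType} (i k : nat) : poch (1 + i%:R : F) k != 0.
Proof.
apply: poch_neq0 => m _; rewrite nat1r -natrD pnatr_eq0 addSn //.
Qed.

Lemma term_id {F : numFieldType} (a b c d e : F) (N k i : nat) :
  (k + i <= N)%N ->
  a != 0 ->
  poch (1 + a - b) k != 0 -> poch (1 + a - c) k != 0 ->
  poch (d + e - a - N%:R) k != 0 -> poch (d + e - a - N%:R + k%:R) i != 0 ->
  poch (1 + a) (k + i) != 0 -> poch (1 + a) (k + k) != 0 ->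
  poch (1 + a + 2%:R * k%:R) i != 0 ->
  UW a d e N (k + i) * tD a b c (k + i) k =
  alW a b c d e N k * tS (d + k%:R) (e + k%:R) (1 + a + 2%:R * k%:R) (N - k) i.
Proof.
move=> hN h1 h2 h3 h4 h5 h6 h7 h8.
have E1 : poch (1 + a + (k + i)%:R) k =
   poch (1 + a) (k + k) * poch (1 + a + 2%:R * k%:R) i / poch (1 + a) (k + i).
  apply: (canRL (mulfK h6)).
  rewrite mulrC -poch_add -(addnC k) addnA poch_add; congr (_ * _).
  by congr poch; rewrite natrD; ring.
have Ef : ((k + i)`!)%:R = (i`!)%:R * poch (1 + i%:R : F) k.
  by rewrite addnC !fact_poch poch_add.
have En : poch (- (k + i)%:R : F) k = (-1) ^+ k * poch (1 + i%:R) k.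
  by rewrite poch_refl; congr (_ * poch _ _); rewrite natrD; ring.
rewrite /UW /tD /alW /tS E1 Ef En.
rewrite (poch_add d k i) (poch_add e k i) (poch_add (- N%:R) k i) (poch_add (d + e - a - N%:R) k i).
rewrite natrB //; last by lia.
have -> : 1 + (d + k%:R) + (e + k%:R) - (1 + a + 2%:R * k%:R) - (N%:R - k%:R) = d + e - a - N%:R + k%:R by ring.
have -> : - (N%:R - k%:R) = - N%:R + k%:R :> F by ring.
have h9 := fact_neq0 (F:=F) i. have h10 := fact_neq0 (F:=F) k. have h11 := poch_nat_neq0 (F:=F) i k.
field.
by repeat (apply/andP; split).
Qed.

Definition wW {F : numFieldType} (a b c d e : F) (N k : nat) : F :=
  (a + 2%:R * k%:R) / a * poch a k * poch b k * poch c k * poch d k * poch e k * poch (- N%:R) k /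
  (poch (1 + a - b) k * poch (1 + a - c) k * poch (1 + a - d) k * poch (1 + a - e) k *
   poch (1 + a + N%:R) k * (k`!)%:R).

Definition vW {F : numFieldType} (a b c d e : F) (N j : nat) : F :=
  poch (1 + a - b - c) j * poch d j * poch e j * poch (- N%:R) j /
  (poch (1 + a - b) j * poch (1 + a - c) j * poch (d + e - a - N%:R) j * (j`!)%:R).

Definition PW {F : numFieldType} (a d e : F) (N : nat) : F :=
  poch (1 + a) N * poch (1 + a - d - e) N / (poch (1 + a - d) N * poch (1 + a - e) N).

Lemma step_six {F : numFieldType} (a b c d e : F) (k m : nat) :
  a != 0 ->
  poch (1 + a - b) k != 0 -> poch (1 + a - c) k != 0 ->
  poch (1 + a - d) k != 0 -> poch (1 + a - e) k != 0 ->
  poch (1 + a - d + k%:R) m != 0 -> poch (1 + a - e + k%:R) m != 0 ->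
  poch (1 + a) (k + m) != 0 -> poch (1 + a) (k + k) != 0 ->
  poch (1 + a + 2%:R * k%:R) m != 0 -> poch (1 + a - d - e) m != 0 ->
  poch (1 + a - d - e + m%:R) k != 0 ->
  PW a d e (k + m) * alW a b c d e (k + m) k *
    SS (d + k%:R) (e + k%:R) (1 + a + 2%:R * k%:R) (k + m - k)
  = wW a b c d e (k + m) k.
Proof.
move=> h1 h2 h3 h4 h5 h6 h7 h8 h9 h10 h11 h12.
rewrite addKn.
have E1 : poch (1 + a + (k + m)%:R) k =
   poch (1 + a) (k + k) * poch (1 + a + 2%:R * k%:R) m / poch (1 + a) (k + m).
  apply: (canRL (mulfK h8)).
  rewrite mulrC -poch_add -(addnC k) addnA poch_add; congr (_ * _).
  by congr poch; rewrite natrD; ring.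
have E2 : poch (d + e - a - (k + m)%:R) k = (-1) ^+ k * poch (1 + a - d - e + m%:R) k.
  by rewrite poch_refl; congr (_ * poch _ _); rewrite natrD; ring.
have E3 : poch (1 + a - d - e) (k + m) = poch (1 + a - d - e) m * poch (1 + a - d - e + m%:R) k.
  by rewrite addnC poch_add.
rewrite /PW /alW /SS /wW E1 E2 E3 (poch_add (1 + a - d) k m) (poch_add (1 + a - e) k m).
have -> : 1 + a + 2%:R * k%:R - (d + k%:R) = 1 + a - d + k%:R by ring.
have -> : 1 + a + 2%:R * k%:R - (e + k%:R) = 1 + a - e + k%:R by ring.
have -> : 1 + a - d + k%:R - (e + k%:R) = 1 + a - d - e by ring.
have h13 := fact_neq0 (F:=F) k.
have h14 : (-1) ^+ k != 0 :> F by rewrite expf_neq0 // oppr_eq0 oner_eq0.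
field.
by repeat (apply/andP; split).
Qed.

Definition nzb {F : numFieldType} (y : F) (M : nat) := forall i, (i <= M)%N -> y + i%:R != 0.

Lemma nzb_app {F : numFieldType} {y z : F} {M s : nat} : nzb y M -> (s <= M)%N -> z = y + s%:R -> z != 0.
Proof. by move=> h hs ->; apply: h. Qed.

Lemma poch_nzb {F : numFieldType} {y z : F} {M s n : nat} : nzb y M -> (s + n <= M.+1)%N ->
  z = y + s%:R -> poch z n != 0.
Proof.
move=> h hs ->; apply: poch_neq0 => i hi.
rewrite -addrA -natrD; apply: h; lia.
Qed.

Lemma v_split {F : numFieldType} (a b c d e : F) N j :
  poch (1 + a) j != 0 -> poch (1 + a - b) j != 0 -> poch (1 + a - c) j != 0 ->
  poch (d + e - a - N%:R) j != 0 ->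
  vW a b c d e N j = UW a d e N j * SD a b c j.
Proof.
move=> h1 h2 h3 h4; rewrite /vW /UW /SD.
have h5 := fact_neq0 (F:=F) j.
field; by repeat (apply/andP; split).
Qed.

Lemma whip_gen {F : numFieldType} (a b c d e : F) N :
  a != 0 -> nzb (1 + a - b) N -> nzb (1 + a - c) N -> nzb (1 + a - d) N ->
  nzb (1 + a - e) N -> nzb (1 + a) N.*2 -> nzb (1 + a - d - e) N ->
  nzb (d + e - a - N%:R) N ->
  \sum_(k < N.+1) wW a b c d e N k = PW a d e N * \sum_(j < N.+1) vW a b c d e N j.
Proof.
move=> ha hb hc hd he hA hde hD.
have addr0' : forall y : F, y = y + 0%:R by move=> y; rewrite addr0.
have E : \sum_(j < N.+1) vW a b c d e N j =
   \sum_(j < N.+1) \sum_(k < j.+1) UW a d e N j * tD a b c j k.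
  apply: eq_bigr => j _.
  rewrite v_split; last 4 first.
  - by apply: (poch_nzb hA) (addr0' _); have := ltn_ord j; lia.
  - by apply: (poch_nzb hb) (addr0' _); have := ltn_ord j; lia.
  - by apply: (poch_nzb hc) (addr0' _); have := ltn_ord j; lia.
  - by apply: (poch_nzb hD) (addr0' _); have := ltn_ord j; lia.
  rewrite -doug; last 4 first.
  - exact: ha.
  - by move=> i hi; apply: hb; have := ltn_ord j; lia.
  - by move=> i hi; apply: hc; have := ltn_ord j; lia.
  - by move=> i hi; apply: hA; have := ltn_ord j; lia.
  by rewrite mulr_sumr.
rewrite E (sum_tri (fun j k => UW a d e N j * tD a b c j k)) mulr_sumr.
apply: eq_bigr => k _.
have kN : (k <= N)%N by have := ltn_ord k; lia.
under eq_bigr => i _.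
  rewrite term_id; last 9 first.
  - by have := ltn_ord i; lia.
  - exact: ha.
  - by apply: (poch_nzb hb) (addr0' _); lia.
  - by apply: (poch_nzb hc) (addr0' _); lia.
  - by apply: (poch_nzb hD) (addr0' _); lia.
  - by apply: (poch_nzb hD) (erefl _); have := ltn_ord i; lia.
  - by apply: (poch_nzb hA) (addr0' _); have := ltn_ord i; lia.
  - by apply: (poch_nzb hA) (addr0' _); lia.
  - apply: (poch_nzb (s := (k + k)%N) hA); first by have := ltn_ord i; lia.
    by rewrite natrD; ring.
  over.
rewrite -mulr_sumr saal; last 3 first.
- move=> i hi; apply: (nzb_app (s := (k + k + i)%N) hA); first by lia.
  by rewrite !natrD; ring.
- move=> i hi; apply: (nzb_app (s := i) hde); first by lia.
  by ring.
- move=> i hi; apply: (nzb_app (s := (k + i)%N) hD); first by lia.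
  by rewrite natrB // natrD; ring.
have := @step_six F a b c d e k (N - k) ha.
rewrite subnKC // mulrA => -> //.
- by apply: (poch_nzb hb) (addr0' _); lia.
- by apply: (poch_nzb hc) (addr0' _); lia.
- by apply: (poch_nzb hd) (addr0' _); lia.
- by apply: (poch_nzb he) (addr0' _); lia.
- by apply: (poch_nzb hd) (erefl _); lia.
- by apply: (poch_nzb he) (erefl _); lia.
- by apply: (poch_nzb hA) (addr0' _); lia.
- by apply: (poch_nzb hA) (addr0' _); lia.
- apply: (poch_nzb (s := (k + k)%N) hA); first by lia.
  by rewrite natrD; ring.
- by apply: (poch_nzb hde) (addr0' _); lia.
- by apply: (poch_nzb hde) (erefl _); lia.
Qed.

Definition Rep {F : numFieldType} (x0 : F) (g : F -> F) :=
  exists p q : {poly F}, q.[x0] != 0 /\ forall x, q.[x] != 0 -> g x = p.[x] / q.[x].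

Lemma Rep_const {F : numFieldType} {x0 : F} (c : F) : Rep x0 (fun _ => c).
Proof.
exists c%:P, 1; split; first by rewrite hornerC oner_eq0.
by move=> x _; rewrite !hornerC divr1.
Qed.

Lemma Rep_id {F : numFieldType} {x0 : F} : Rep x0 (fun x => x).
Proof.
exists 'X, 1; split; first by rewrite hornerC oner_eq0.
by move=> x _; rewrite hornerX hornerC divr1.
Qed.

Lemma Rep_add {F : numFieldType} {x0 : F} {g h : F -> F} :
  Rep x0 g -> Rep x0 h -> Rep x0 (fun x => g x + h x).
Proof.
move=> [p1 [q1 [n1 e1]]] [p2 [q2 [n2 e2]]].
exists (p1 * q2 + p2 * q1), (q1 * q2); split; first by rewrite hornerM mulf_neq0.
move=> x; rewrite hornerM mulf_eq0 negb_or => /andP[h1 h2].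
rewrite e1 // e2 // hornerD !hornerM; field; by rewrite h1 h2.
Qed.

Lemma Rep_mul {F : numFieldType} {x0 : F} {g h : F -> F} :
  Rep x0 g -> Rep x0 h -> Rep x0 (fun x => g x * h x).
Proof.
move=> [p1 [q1 [n1 e1]]] [p2 [q2 [n2 e2]]].
exists (p1 * p2), (q1 * q2); split; first by rewrite hornerM mulf_neq0.
move=> x; rewrite hornerM mulf_eq0 negb_or => /andP[h1 h2].
rewrite e1 // e2 // !hornerM; field; by rewrite h1 h2.
Qed.

Lemma Rep_opp {F : numFieldType} {x0 : F} {g : F -> F} : Rep x0 g -> Rep x0 (fun x => - g x).
Proof.
move=> [p1 [q1 [n1 e1]]]; exists (- p1), q1; split => // x h.
by rewrite e1 // hornerN mulNr.
Qed.

Lemma Rep_inv {F : numFieldType} {x0 : F} {g : F -> F} : g x0 != 0 -> Rep x0 g -> Rep x0 (fun x => (g x)^-1).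
Proof.
move=> g0 [p1 [q1 [n1 e1]]].
have hp : p1.[x0] != 0.
  by move: g0; rewrite e1 //; apply: contra => /eqP ->; rewrite mul0r.
exists (q1 * q1), (p1 * q1); split; first by rewrite hornerM mulf_neq0.
move=> x; rewrite hornerM mulf_eq0 negb_or => /andP[h1 h2].
rewrite e1 // hornerM; field; by rewrite h1 h2.
Qed.

Lemma Rep_ext {F : numFieldType} {x0 : F} {g h : F -> F} : (forall x, g x = h x) -> Rep x0 g -> Rep x0 h.
Proof. by move=> e [p [q [n1 e1]]]; exists p, q; split => // x hx; rewrite -e e1. Qed.

Lemma Rep_sum {F : numFieldType} {x0 : F} {G : nat -> F -> F} {n : nat} :
  (forall i, Rep x0 (G i)) -> Rep x0 (fun x => \sum_(i < n) G i x).
Proof.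
move=> h; elim: n => [|n IH].
  by apply: (Rep_ext _ (Rep_const 0)) => x; rewrite big_ord0.
refine (Rep_ext _ (Rep_add IH (h n))) => x /=.
by rewrite big_ord_recr.
Qed.

Lemma Rep_prod {F : numFieldType} {x0 : F} {G : nat -> F -> F} {n : nat} :
  (forall i, Rep x0 (G i)) -> Rep x0 (fun x => \prod_(i < n) G i x).
Proof.
move=> h; elim: n => [|n IH].
  by apply: (Rep_ext _ (Rep_const 1)) => x; rewrite big_ord0.
refine (Rep_ext _ (Rep_mul IH (h n))) => x /=.
by rewrite big_ord_recr.
Qed.

Lemma Rep_poch {F : numFieldType} {x0 : F} {g : F -> F} {n : nat} : Rep x0 g -> Rep x0 (fun x => poch (g x) n).
Proof.
move=> h; rewrite /poch.
apply: (Rep_prod (G := fun i x => g x + i%:R)) => i.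
apply: Rep_add => //; exact: Rep_const.
Qed.

Lemma poly_all0 {F : numFieldType} (r : {poly F}) : (forall x, r.[x] = 0) -> r = 0.
Proof.
move=> h; apply/eqP; apply/negPn/negP => hr.
set rs := [seq (i%:R : F) | i <- iota 0 (size r)].
have H1 : all (root r) rs by apply/allP => x /mapP [i _ ->]; rewrite /root h.
have H2 : uniq rs.
  by rewrite map_inj_uniq ?iota_uniq // => i j /eqP; rewrite eqr_nat => /eqP.
by have := max_poly_roots hr H1 H2; rewrite size_map size_iota ltnn.
Qed.

Lemma ext_eq {F : numFieldType} (x0 : F) (L Rr : F -> F) (bad : seq F) :
  Rep x0 L -> Rep x0 Rr -> (forall x, x \notin bad -> L x = Rr x) -> L x0 = Rr x0.
Proof.
move=> hL hR hgen.
have [p [q [nq e]]] := Rep_add hL (Rep_opp hR).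
set B := \prod_(b <- bad) ('X - b%:P).
have hr : p * q * B = 0.
  apply: poly_all0 => x; rewrite !hornerM.
  have [xb|xnb] := boolP (x \in bad).
    suff -> : B.[x] = 0 by rewrite mulr0.
    by rewrite /B horner_prod (big_rem x) //= hornerD hornerX hornerN hornerC subrr mul0r.
  have [qx|qx] := eqVneq q.[x] 0; first by rewrite qx mulr0 mul0r.
  have := e x qx; rewrite hgen // subrr => /esym /eqP.
  by rewrite mulf_eq0 invr_eq0 (negbTE qx) orbF => /eqP ->; rewrite !mul0r.
have Bn0 : B != 0 by apply: monic_neq0; exact: monic_prod_XsubC.
have qn0 : q != 0 by apply: contraNneq nq => ->; rewrite horner0.
move/eqP: hr; rewrite !mulf_eq0 (negbTE Bn0) (negbTE qn0) !orbF => /eqP p0.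
by apply/eqP; rewrite -subr_eq0 e // p0 horner0 mul0r.
Qed.

Definition nz {F : numFieldType} (y : F) := forall i : nat, y + i%:R != 0.

Lemma poch_nz {F : numFieldType} (y : F) n : nz y -> poch y n != 0.
Proof. by move=> h; apply: poch_neq0 => i _; apply: h. Qed.

Lemma nzb_good {F : numFieldType} {x y : F} {f : nat -> F} {M : nat} {s : seq F} :
  x \notin s -> (forall i, (i <= M)%N -> f i \in s) ->
  (forall i, x - f i = y + i%:R) -> nzb y M.
Proof.
move=> hx hs hf i hi; rewrite -hf subr_eq0; apply: contraNneq hx => ->; exact: hs.
Qed.

Lemma nzb_good' {F : numFieldType} {x y : F} {f : nat -> F} {M : nat} {s : seq F} :
  x \notin s -> (forall i, (i <= M)%N -> f i \in s) ->
  (forall i, f i - x = y + i%:R) -> nzb y M.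
Proof.
move=> hx hs hf i hi; rewrite -hf subr_eq0; apply: contraNneq hx => <-; exact: hs.
Qed.

Definition blk {F : numFieldType} (f : nat -> F) M := locked [seq f j | j <- iota 0 M.+1].

Lemma in_blk {F : numFieldType} (f : nat -> F) M i : (i <= M)%N -> f i \in blk f M.
Proof. by move=> h; rewrite /blk -lock; apply: map_f; rewrite mem_iota; lia. Qed.

Definition badW {F : numFieldType} (b c d e : F) N : seq F :=
  (0 :: blk (fun i => b - 1 - i%:R) N ++ blk (fun i => c - 1 - i%:R) N ++
       blk (fun i => d - 1 - i%:R) N ++ blk (fun i => e - 1 - i%:R) N ++
       blk (fun i => - 1 - i%:R) N.*2 ++ blk (fun i => d + e - 1 - i%:R) N ++
       blk (fun i => d + e - N%:R + i%:R) N).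

Ltac rep := repeat first [ apply: Rep_inv | apply: Rep_poch | apply: Rep_mul | apply: Rep_add
  | apply: Rep_opp | apply: Rep_id | apply: Rep_const ].

Lemma whip {F : numFieldType} (a b c d e : F) N :
  a != 0 -> nz (1 + a - b) -> nz (1 + a - c) -> nz (1 + a - d) -> nz (1 + a - e) ->
  nz (1 + a + N%:R) -> nz (d + e - a - N%:R) ->
  \sum_(k < N.+1) wW a b c d e N k = PW a d e N * \sum_(j < N.+1) vW a b c d e N j.
Proof.
move=> ha hb hc hd he hN hD.
apply: (@ext_eq F a (fun x => \sum_(k < N.+1) wW x b c d e N k)
   (fun x => PW x d e N * \sum_(j < N.+1) vW x b c d e N j)
   (badW b c d e N)).
- apply: (@Rep_sum _ _ (fun k x => wW x b c d e N k)) => k; rewrite /wW; rep.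
  all: rewrite /= ?mulf_neq0 ?poch_nz ?fact_neq0 //.
- apply: Rep_mul; first by rewrite /PW; rep; rewrite /= ?mulf_neq0 ?poch_nz.
  apply: (@Rep_sum _ _ (fun k x => vW x b c d e N k)) => k; rewrite /vW; rep.
  all: rewrite /= ?mulf_neq0 ?poch_nz ?fact_neq0 //.
move=> x hx; have : x \notin badW b c d e N := hx; rewrite /badW in_cons !mem_cat !negb_or => /andP[h0 /andP[h1 /andP[h2 /andP[h3 /andP[h4 /andP[h5 /andP[h6 h7]]]]]]].
apply: whip_gen.
- done.
- by apply: (nzb_good h1 (@in_blk F (fun i => b - 1 - i%:R) N)) => i; ring.
- by apply: (nzb_good h2 (@in_blk F (fun i => c - 1 - i%:R) N)) => i; ring.
- by apply: (nzb_good h3 (@in_blk F (fun i => d - 1 - i%:R) N)) => i; ring.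
- by apply: (nzb_good h4 (@in_blk F (fun i => e - 1 - i%:R) N)) => i; ring.
- by apply: (nzb_good h5 (@in_blk F (fun i => - 1 - i%:R) N.*2)) => i; ring.
- by apply: (nzb_good h6 (@in_blk F (fun i => d + e - 1 - i%:R) N)) => i; ring.
- by apply: (nzb_good' h7 (@in_blk F (fun i => d + e - N%:R + i%:R) N)) => i; ring.
Qed.

Lemma poch_down {F : fieldType} (y : F) n : y + n%:R != 0 ->
  poch y n = y * poch (y + 1) n / (y + n%:R).
Proof.
move=> h; apply: (canRL (mulfK h)).
by rewrite -pochS (pochSl' (erefl (y + 1))).
Qed.

Lemma poch_succ {F : fieldType} (y : F) n : y != 0 ->
  poch (y + 1) n = poch y n * (y + n%:R) / y.
Proof.
move=> h; apply: (canRL (mulfK h)).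
by rewrite mulrC -(pochSl' (erefl (y + 1))) pochS.
Qed.

Lemma nz_shift {F : numFieldType} {y z : F} : nz y -> z = y + 1 -> nz z.
Proof. by move=> h -> i; rewrite -addrA nat1r; apply: h. Qed.

Definition Kc {F : numFieldType} (a b c d e : F) (M : nat) : F :=
  (a + 2%:R) * (a + 1) * b * c * d * e * (- (M.+1)%:R) /
  ((1 + a - b) * (1 + a - c) * (1 + a - d) * (1 + a - e) * (1 + a + (M.+1)%:R)).

Lemma T1 {F : numFieldType} (a b c d e : F) M m :
  a != 0 -> a + 2%:R != 0 ->
  1 + a - b != 0 -> 1 + a - c != 0 -> 1 + a - d != 0 -> 1 + a - e != 0 ->
  1 + a + (M.+1)%:R != 0 ->
  poch (1 + (a + 2%:R) - (b + 1)) m != 0 -> poch (1 + (a + 2%:R) - (c + 1)) m != 0 ->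
  poch (1 + (a + 2%:R) - (d + 1)) m != 0 -> poch (1 + (a + 2%:R) - (e + 1)) m != 0 ->
  poch (1 + (a + 2%:R) + M%:R) m != 0 ->
  (m.+1)%:R * ((m.+1)%:R + a) * wW a b c d e M.+1 m.+1 =
  Kc a b c d e M * wW (a + 2%:R) (b + 1) (c + 1) (d + 1) (e + 1) M m.
Proof.
move=> ha ha2 hb hc hd he hN pb pc pd pe pN.
rewrite /wW /Kc.
have E1 : 1 + a - b + 1 = 1 + (a + 2%:R) - (b + 1) by ring.
have E2 : 1 + a - c + 1 = 1 + (a + 2%:R) - (c + 1) by ring.
have E3 : 1 + a - d + 1 = 1 + (a + 2%:R) - (d + 1) by ring.
have E4 : 1 + a - e + 1 = 1 + (a + 2%:R) - (e + 1) by ring.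
have E5 : 1 + a + (M.+1)%:R + 1 = 1 + (a + 2%:R) + M%:R by rewrite -natr1; ring.
have E6 : - (M.+1)%:R + 1 = - M%:R :> F by rewrite -natr1; ring.
rewrite (pochSl' E1) (pochSl' E2) (pochSl' E3) (pochSl' E4) (pochSl' E5) (pochSl' E6).
rewrite (pochSl' (erefl (b + 1))) (pochSl' (erefl (c + 1))) (pochSl' (erefl (d + 1))).
rewrite (pochSl' (erefl (e + 1))) (pochSl' (erefl (a + 1))) factS_F.
have hf := fact_neq0 (F:=F) m. have hm := natS_neq0 (F:=F) m.
have [z|nz0] := eqVneq (a + 1 + m%:R) 0.
  have z' : (m.+1)%:R + a = 0 by rewrite -z -natr1; ring.
  rewrite z' mulr0 mul0r.
  case: m z {z' pb pc pd pe pN hf hm} => [|m] z.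
    have -> : a + 1 = 0 by rewrite -z mulr0n addr0.
    by rewrite !(mulr0, mul0r).
    by rewrite (pochS (a + 2%:R)) (_ : a + 2%:R + m%:R = 0) ?(mulr0, mul0r) // -z -natr1; ring.
rewrite (poch_down _ _ nz0).
have -> : a + 1 + 1 = a + 2%:R by ring.
field.
by rewrite !nat1r; repeat (apply/andP; split).
Qed.

Definition v2W {F : numFieldType} (a b c d e : F) (N j : nat) : F :=
  poch (a - b - c) j * poch d j * poch e j * poch (- N%:R) j /
  (poch (1 + a - b) j * poch (1 + a - c) j * poch (d + e - a - N%:R) j * (j`!)%:R).

Definition kap {F : numFieldType} (a b c d e : F) (M : nat) : F :=
  d * e * (- (M.+1)%:R) / ((1 + a - b) * (1 + a - c) * (d + e - a - (M.+1)%:R)).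

Lemma T2 {F : numFieldType} (a b c d e : F) M m :
  1 + a - b != 0 -> 1 + a - c != 0 -> d + e - a - (M.+1)%:R != 0 ->
  poch (1 + (a + 2%:R) - (b + 1)) m != 0 -> poch (1 + (a + 2%:R) - (c + 1)) m != 0 ->
  poch ((d + 1) + (e + 1) - (a + 2%:R) - M%:R) m != 0 ->
  (m.+1)%:R * v2W a b c d e M.+1 m.+1 =
  (a - b - c) * kap a b c d e M * vW (a + 2%:R) (b + 1) (c + 1) (d + 1) (e + 1) M m.
Proof.
move=> hb hc hD pb pc pD.
rewrite /v2W /vW /kap.
have E1 : 1 + a - b + 1 = 1 + (a + 2%:R) - (b + 1) by ring.
have E2 : 1 + a - c + 1 = 1 + (a + 2%:R) - (c + 1) by ring.
have E3 : d + e - a - (M.+1)%:R + 1 = (d + 1) + (e + 1) - (a + 2%:R) - M%:R by rewrite -natr1; ring.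
have E6 : - (M.+1)%:R + 1 = - M%:R :> F by rewrite -natr1; ring.
have E7 : a - b - c + 1 = 1 + (a + 2%:R) - (b + 1) - (c + 1) by ring.
rewrite (pochSl' E1) (pochSl' E2) (pochSl' E3) (pochSl' E6) (pochSl' E7).
rewrite (pochSl' (erefl (d + 1))) (pochSl' (erefl (e + 1))) factS_F.
have hf := fact_neq0 (F:=F) m. have hm := natS_neq0 (F:=F) m.
field.
by rewrite !nat1r; repeat (apply/andP; split).
Qed.

Lemma T3 {F : numFieldType} (a b c d e : F) N n :
  a - b - c != 0 -> poch (1 + a - b) n != 0 -> poch (1 + a - c) n != 0 ->
  poch (d + e - a - N%:R) n != 0 ->
  vW a b c d e N n = v2W a b c d e N n + n%:R / (a - b - c) * v2W a b c d e N n.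
Proof.
move=> hx h1 h2 h3; rewrite /vW /v2W.
have -> : 1 + a - b - c = a - b - c + 1 by ring.
rewrite poch_succ //.
have hf := fact_neq0 (F:=F) n.
field; by repeat (apply/andP; split).
Qed.

Lemma T4 {F : numFieldType} (a b c d e : F) M :
  a + 2%:R != 0 ->
  1 + a - b != 0 -> 1 + a - c != 0 -> 1 + a - d != 0 -> 1 + a - e != 0 ->
  1 + a + (M.+1)%:R != 0 -> d + e - a - (M.+1)%:R != 0 ->
  poch (1 + (a + 2%:R) - (d + 1)) M != 0 -> poch (1 + (a + 2%:R) - (e + 1)) M != 0 ->
  Kc a b c d e M * PW (a + 2%:R) (d + 1) (e + 1) M = - (b * c) * PW a d e M.+1 * kap a b c d e M.
Proof.
move=> ha2 hb hc hd he hN hD pd pe.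
rewrite /Kc /PW /kap.
have E1 : 1 + a - d + 1 = 1 + (a + 2%:R) - (d + 1) by ring.
have E2 : 1 + a - e + 1 = 1 + (a + 2%:R) - (e + 1) by ring.
rewrite (pochSl' E1) (pochSl' E2) (pochSl' (erefl (1 + a + 1))) (pochS (1 + a - d - e)).
have hN' : 1 + a + 1 + M%:R != 0 by move: hN; rewrite -natr1; apply: contra => /eqP E; apply/eqP; rewrite -E; ring.
rewrite (poch_down _ _ hN').
have -> : 1 + a + 1 + 1 = 1 + (a + 2%:R) by ring.
have -> : 1 + (a + 2%:R) - (d + 1) - (e + 1) = 1 + a - d - e by ring.
field.
by rewrite !nat1r; repeat (apply/andP; split).
Qed.

Lemma nz0 {F : numFieldType} (y : F) : nz y -> y != 0.
Proof. by move=> h; have := h 0%N; rewrite addr0. Qed.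

Lemma main_gen {F : numFieldType} (a b c d e p : F) N :
  a != 0 -> a + 2%:R != 0 ->
  nz (1 + a - b) -> nz (1 + a - c) -> nz (1 + a - d) -> nz (1 + a - e) ->
  nz (1 + a + N%:R) -> nz (d + e - a - N%:R) ->
  p != 0 -> a - p != 0 -> a - b - c != 0 -> p * (a - p) - b * c != 0 ->
  \sum_(n < N.+1) wW a b c d e N n * ((p + n%:R) * (a - p + n%:R) / (p * (a - p)))
  = PW a d e N * \sum_(n < N.+1) v2W a b c d e N n *
      ((p * (b + c - a) * (p - a) / (p * (a - p) - b * c) + n%:R) /
       (p * (b + c - a) * (p - a) / (p * (a - p) - b * c))).
Proof.
move=> ha ha2 hb hc hd he hN hD hp hap hx hden.
set hh := p * (b + c - a) * (p - a) / (p * (a - p) - b * c).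
have hhn : hh != 0.
  have e1 : b + c - a = - (a - b - c) by ring.
  have e2 : p - a = - (a - p) by ring.
  by rewrite /hh e1 e2 !mulf_neq0 ?oppr_eq0 ?invr_eq0.
case: N hN hD => [|M] hN hD.
  rewrite !big_ord1 /wW /v2W /PW !poch0 /= !mulr0 !addr0. field. by rewrite hhn hap hp ha oner_eq0.
have hb' : nz (1 + (a + 2%:R) - (b + 1)) by apply: (nz_shift hb); ring.
have hc' : nz (1 + (a + 2%:R) - (c + 1)) by apply: (nz_shift hc); ring.
have hd' : nz (1 + (a + 2%:R) - (d + 1)) by apply: (nz_shift hd); ring.
have he' : nz (1 + (a + 2%:R) - (e + 1)) by apply: (nz_shift he); ring.
have hN' : nz (1 + (a + 2%:R) + M%:R) by apply: (nz_shift hN); rewrite -natr1; ring.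
have hD' : nz ((d + 1) + (e + 1) - (a + 2%:R) - M%:R) by apply: (nz_shift hD); rewrite -natr1; ring.
set cp := p * (a - p).
have hcp : cp != 0 by rewrite mulf_neq0.
have F1 : \sum_(n < M.+2) wW a b c d e M.+1 n * ((p + n%:R) * (a - p + n%:R) / cp)
   = \sum_(n < M.+2) wW a b c d e M.+1 n +
     cp^-1 * \sum_(n < M.+2) n%:R * (n%:R + a) * wW a b c d e M.+1 n.
  rewrite mulr_sumr -big_split; apply: eq_bigr => n _ /=; rewrite /cp.
  field; by rewrite hp hap.
have F3 : \sum_(n < M.+2) n%:R * (n%:R + a) * wW a b c d e M.+1 n
   = Kc a b c d e M * \sum_(m < M.+1) wW (a + 2%:R) (b + 1) (c + 1) (d + 1) (e + 1) M m.
  rewrite big_ord_recl /= mul0r mul0r add0r mulr_sumr; apply: eq_bigr => m _.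
  rewrite /bump /= add1n; apply: T1 => //.
  - exact: nz0.
  - exact: nz0.
  - exact: nz0.
  - exact: nz0.
  - exact: nz0.
  - exact: poch_nz.
  - exact: poch_nz.
  - exact: poch_nz.
  - exact: poch_nz.
  - exact: poch_nz.
have F4 : \sum_(n < M.+2) v2W a b c d e M.+1 n * ((hh + n%:R) / hh)
   = \sum_(n < M.+2) v2W a b c d e M.+1 n + hh^-1 * \sum_(n < M.+2) n%:R * v2W a b c d e M.+1 n.
  rewrite mulr_sumr -big_split; apply: eq_bigr => n _ /=.
  field; exact: hhn.
have F5 : \sum_(n < M.+2) vW a b c d e M.+1 n
   = \sum_(n < M.+2) v2W a b c d e M.+1 n + (a - b - c)^-1 * \sum_(n < M.+2) n%:R * v2W a b c d e M.+1 n.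
  rewrite mulr_sumr -big_split; apply: eq_bigr => n _ /=.
  rewrite T3 //; last 3 first.
  - exact: poch_nz. - exact: poch_nz. - exact: poch_nz.
  by congr (_ + _); ring.
have F6 : \sum_(n < M.+2) n%:R * v2W a b c d e M.+1 n
   = (a - b - c) * kap a b c d e M * \sum_(m < M.+1) vW (a + 2%:R) (b + 1) (c + 1) (d + 1) (e + 1) M m.
  rewrite big_ord_recl /= mul0r add0r mulr_sumr; apply: eq_bigr => m _.
  rewrite /bump /= add1n; apply: T2.
  - exact: nz0. - exact: nz0. - exact: nz0.
  - exact: poch_nz. - exact: poch_nz. - exact: poch_nz.
have W1 := @whip F a b c d e M.+1 ha hb hc hd he hN hD.
have W2 := @whip F (a + 2%:R) (b + 1) (c + 1) (d + 1) (e + 1) M ha2 hb' hc' hd' he' hN' hD'.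
have F7 := @T4 F a b c d e M ha2 (nz0 _ hb) (nz0 _ hc) (nz0 _ hd) (nz0 _ he) (nz0 _ hN) (nz0 _ hD) (poch_nz _ M hd') (poch_nz _ M he').
rewrite F1 F3 W1 W2 F4 F5 F6 mulrA F7.
have hpa : p - a != 0 by rewrite -oppr_eq0 opprB.
have hbca : b + c - a != 0.
  have -> : b + c - a = - (a - b - c) by ring.
  by rewrite oppr_eq0.
rewrite /hh /cp.
field.
by rewrite hden hpa hbca hp hap hx.
Qed.

Lemma lower_ok_cons {F : numFieldType} (y : F) s : lower_ok (y :: s) -> nz y /\ lower_ok s.
Proof.
move=> h; split.
  move=> i; apply/eqP => E; apply: (h y (mem_head _ _) i).
  by apply/eqP; rewrite -subr_eq0 opprK E.
by move=> z hz; apply: h; rewrite in_cons hz orbT.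
Qed.

Lemma nz_eq {F : numFieldType} {y z : F} : nz y -> y = z -> nz z.
Proof. by move=> h <-. Qed.

Lemma hyp_sum {F : numFieldType} N (a b : seq F) :
  hypF_term N a b 1 = \sum_(n < N.+1) (\prod_(x <- a) poch x n) / ((\prod_(y <- b) poch y n) * (n`!)%:R).
Proof. by apply: eq_bigr => n _; rewrite /hyp_term expr1n mulr1. Qed.

Theorem main_F {F : numFieldType} (N : nat) (f a1 a2 p d1 d2 : F) :
  lower_ok [:: (f - 1) / 2%:R; f - a1; f - a2; p; f - p - 1; f - d1; f - d2;
               f + N%:R] ->
  p * (f - p - 1) - a1 * a2 != 0 ->
  let h := p * (a1 + a2 - f + 1) * (p - f + 1) / (p * (f - p - 1) - a1 * a2) in
  lower_ok [:: f - a1; f - a2; 1 + d1 + d2 - f - N%:R; h] ->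
  hypF_term N
    [:: f - 1; (f + 1) / 2%:R; a1; a2; f - p; p + 1; d1; d2; - N%:R]
    [:: (f - 1) / 2%:R; f - a1; f - a2; p; f - p - 1; f - d1; f - d2; f + N%:R] 1
  = poch f N * poch (f - d1 - d2) N / (poch (f - d1) N * poch (f - d2) N)
    * hypF_term N
        [:: d1; d2; f - a1 - a2 - 1; h + 1; - N%:R]
        [:: f - a1; f - a2; 1 + d1 + d2 - f - N%:R; h] 1.
Proof.
move=> L1 hden h L2.
case/lower_ok_cons: L1 => n2 L1. case/lower_ok_cons: L1 => nb L1.
case/lower_ok_cons: L1 => nc L1. case/lower_ok_cons: L1 => np L1.
case/lower_ok_cons: L1 => nfp L1. case/lower_ok_cons: L1 => nd L1.
case/lower_ok_cons: L1 => ne L1. case/lower_ok_cons: L1 => nN _.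
case/lower_ok_cons: L2 => _ L2. case/lower_ok_cons: L2 => _ L2.
case/lower_ok_cons: L2 => nD L2. case/lower_ok_cons: L2 => nh _.
have h0 := nz0 _ nh.
have hx : f - 1 - a1 - a2 != 0.
  move: h0; rewrite /h; apply: contra => /eqP E.
  have -> : a1 + a2 - f + 1 = - (f - 1 - a1 - a2) by ring.
  by rewrite E oppr0 mulr0 mul0r mul0r.
have ha : f - 1 != 0.
  have := nz0 _ n2; apply: contra => /eqP ->; by rewrite mul0r.
have ha2 : f - 1 + 2%:R != 0.
  have := n2 1%N; apply: contra => /eqP E; apply/eqP.
  have -> : (f - 1) / 2%:R + 1%:R = (f - 1 + 2%:R) / 2%:R.
    by field.
  by rewrite E mul0r.
have := @main_gen F (f - 1) a1 a2 d1 d2 p N ha ha2.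
have E1 : 1 + (f - 1) = f by ring.
rewrite !E1.
move=> /(_ nb nc nd ne nN).
have E2 : 1 + d1 + d2 - f - N%:R = d1 + d2 - (f - 1) - N%:R by ring.
move=> /(_ (nz_eq nD E2) (nz0 _ np)).
have E3 : f - 1 - p = f - p - 1 by ring.
rewrite E3 => /(_ (nz0 _ nfp) hx hden).
have Eh : p * (a1 + a2 - (f - 1)) * (p - (f - 1)) / (p * (f - p - 1) - a1 * a2) = h.
  by rewrite /h; congr (_ * _ * _ / _); ring.
rewrite Eh => Emain.
rewrite !hyp_sum.
have h2 : (2%:R : F) != 0 by rewrite pnatr_eq0.
have LT : forall n : 'I_N.+1,
  \prod_(x <- [:: f - 1; (f + 1) / 2%:R; a1; a2; f - p; p + 1; d1; d2; - N%:R]) poch x n /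
     (\prod_(y <- [:: (f - 1) / 2%:R; f - a1; f - a2; p; f - p - 1; f - d1; f - d2; f + N%:R])
         poch y n * (n`!)%:R)
  = wW (f - 1) a1 a2 d1 d2 N n * ((p + n%:R) * (f - p - 1 + n%:R) / (p * (f - p - 1))).
  move=> n; rewrite !big_cons big_nil /wW !E1.
  have P2 : poch ((f + 1) / 2%:R) n = poch ((f - 1) / 2%:R) n * ((f - 1) / 2%:R + n%:R) / ((f - 1) / 2%:R).
    by rewrite -poch_succ ?(nz0 _ n2) //; congr poch; field.
  have Pfp : poch (f - p) n = poch (f - p - 1) n * (f - p - 1 + n%:R) / (f - p - 1).
    by rewrite -poch_succ ?(nz0 _ nfp) //; congr poch; ring.
  rewrite P2 Pfp poch_succ ?(nz0 _ np) //.
  have q1 := poch_nz _ n n2. have q2 := poch_nz _ n nb. have q3 := poch_nz _ n nc.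
  have q4 := poch_nz _ n np. have q5 := poch_nz _ n nfp. have q6 := poch_nz _ n nd.
  have q7 := poch_nz _ n ne. have q8 := poch_nz _ n nN. have q9 := fact_neq0 (F:=F) n.
  have r1 := nz0 _ n2. have r2 := nz0 _ np. have r3 := nz0 _ nfp.
  field.
  by repeat (apply/andP; split).
have RT : forall n : 'I_N.+1,
  \prod_(x <- [:: d1; d2; f - a1 - a2 - 1; h + 1; - N%:R]) poch x n /
     (\prod_(y <- [:: f - a1; f - a2; 1 + d1 + d2 - f - N%:R; h]) poch y n * (n`!)%:R)
  = v2W (f - 1) a1 a2 d1 d2 N n * ((h + n%:R) / h).
  move=> n; rewrite !big_cons big_nil /v2W !E1 -E2.
  have -> : f - 1 - a1 - a2 = f - a1 - a2 - 1 by ring.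
  rewrite poch_succ //.
  have q2 := poch_nz _ n nb. have q3 := poch_nz _ n nc. have q4 := poch_nz _ n nD.
  have q5 := poch_nz _ n nh. have q9 := fact_neq0 (F:=F) n.
  field.
  by repeat (apply/andP; split).
rewrite (eq_bigr _ (fun n _ => LT n)) (eq_bigr _ (fun n _ => RT n)).
have -> : poch f N * poch (f - d1 - d2) N / (poch (f - d1) N * poch (f - d2) N) = PW (f - 1) d1 d2 N.
  by rewrite /PW E1.
exact: Emain.
Qed.

Theorem mainTheorem2 (R : realType) (N : nat) (f a1 a2 p d1 d2 : R[i]) :
  lower_ok [:: (f - 1) / 2%:R; f - a1; f - a2; p; f - p - 1; f - d1; f - d2;
               f + N%:R] ->
  p * (f - p - 1) - a1 * a2 != 0 ->
  let h := p * (a1 + a2 - f + 1) * (p - f + 1) / (p * (f - p - 1) - a1 * a2) in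
  lower_ok [:: f - a1; f - a2; 1 + d1 + d2 - f - N%:R; h] ->
  hypF_term N
    [:: f - 1; (f + 1) / 2%:R; a1; a2; f - p; p + 1; d1; d2; - N%:R]
    [:: (f - 1) / 2%:R; f - a1; f - a2; p; f - p - 1; f - d1; f - d2; f + N%:R] 1
  = poch f N * poch (f - d1 - d2) N / (poch (f - d1) N * poch (f - d2) N)
    * hypF_term N
        [:: d1; d2; f - a1 - a2 - 1; h + 1; - N%:R]
        [:: f - a1; f - a2; 1 + d1 + d2 - f - N%:R; h] 1.
Proof. exact: (@main_F (R[i] : numFieldType)). Qed.
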